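(* For a complex number $p$, $\deg(p)=1$ if and only if $p$ is a nonzero algebraic number. In particular every algebraic number is a period, and every period of degree $\le 1$ is algebraic.
   Context: Let $\overline{\mathbb{Q}}$ denote the field of algebraic numbers. For $n\ge 1$, an admissible domain in $\mathbb{R}^n$ is a subset of $\mathbb{R}^n$ which is a finite union of sets of the form $\{x\in\mathbb{R}^n : P_1(x)\,\square_1\, 0,\dots,P_r(x)\,\square_r\, 0\}$, where each $P_i$ is a polynomial with real algebraic coefficients and each $\square_i\in\{\ge,>\}$, and which has finite Lebesgue measure $\mathrm{vol}_n$. A real number $p$ is a real period if $p=\mathrm{vol}_n(\Sigma_1)-\mathrm{vol}_n(\Sigma_2)$ for some $n\ge1$ and admissible domains $\Sigma_1,\Sigma_2\subseteq\mathbb{R}^n$; a complex number is a period if its real and imaginary parts are real periods. The degree is defined as follows: $\deg(0)=0$; for a nonzero real period $p$, $\deg(p)$ is the least $n\ge 1$ such that $p=\mathrm{vol}_n(\Sigma_1)-\mathrm{vol}_n(\Sigma_2)$ with $\Sigma_1,\Sigma_2$ admissible domains in $\mathbb{R}^n$; for a complex period $p=a+ib$ ($a,b$ real), $\deg(p)=\max(\deg(a),\deg(b))$; for a complex number that is not a period, $\deg(p)=\infty$, with $\infty$ larger than every integer. *)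

(* Defs.v *)
From Stdlib Require Import Reals List ZArith.
Open Scope R_scope.

(* A polynomial with integer coefficients, constant term first. *)
Fixpoint Zpoly_evalR (p : list Z) (x : R) : R :=
  match p with nil => 0 | c :: q => IZR c + x * Zpoly_evalR q x end.
Definition Zpoly_nonzero (p : list Z) : Prop := exists c, In c p /\ c <> 0%Z.
Definition real_algebraic (x : R) : Prop :=
  exists p, Zpoly_nonzero p /\ Zpoly_evalR p x = 0.

(* Complex numbers as pairs (real part, imaginary part). *)
Definition Cpx : Type := (R * R)%type.
Definition Cadd (z w : Cpx) : Cpx := (fst z + fst w, snd z + snd w).
Definition Cmul (z w : Cpx) : Cpx :=
  (fst z * fst w - snd z * snd w, fst z * snd w + snd z * fst w).
Fixpoint Zpoly_evalC (p : list Z) (z : Cpx) : Cpx :=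
  match p with nil => (0, 0) | c :: q => Cadd (IZR c, 0) (Cmul z (Zpoly_evalC q z)) end.
Definition algebraic (z : Cpx) : Prop :=
  exists p, Zpoly_nonzero p /\ Zpoly_evalC p z = (0, 0).

(* A point of R^n is represented by x : nat -> R, only coordinates i < n matter. *)
Definition pt := nat -> R.
Fixpoint prodn (n : nat) (f : nat -> R) : R :=
  match n with O => 1 | S k => prodn k f * f k end.
(* monomial c * x_0^(e_0) ... x_{n-1}^(e_{n-1}) *)
Definition monomial : Type := (R * list nat)%type.
Definition mono_eval (n : nat) (m : monomial) (x : pt) : R :=
  fst m * prodn n (fun i => x i ^ nth i (snd m) 0%nat).
Definition mpoly : Type := list monomial.
Definition mpoly_eval (n : nat) (P : mpoly) (x : pt) : R :=
  fold_right (fun m acc => mono_eval n m x + acc) 0 P.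
Definition mpoly_real_alg (P : mpoly) : Prop :=
  Forall (fun m => real_algebraic (fst m)) P.

(* condition P >= 0 (strict = false) or P > 0 (strict = true) *)
Definition condition : Type := (mpoly * bool)%type.
Definition cond_holds (n : nat) (c : condition) (x : pt) : Prop :=
  if snd c then 0 < mpoly_eval n (fst c) x else 0 <= mpoly_eval n (fst c) x.
(* finite union of finite intersections of conditions *)
Definition description : Type := list (list condition).
Definition desc_set (n : nat) (D : description) (x : pt) : Prop :=
  exists B, In B D /\ Forall (fun c => cond_holds n c x) B.
Definition desc_real_alg (D : description) : Prop :=
  Forall (fun B => Forall (fun c => mpoly_real_alg (fst c)) B) D.

Definition box : Type := ((nat -> R) * (nat -> R))%type.
Definition box_ok (n : nat) (b : box) : Prop :=
  forall i, (i < n)%nat -> fst b i <= snd b i.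
Definition in_box (n : nat) (b : box) (x : pt) : Prop :=
  forall i, (i < n)%nat -> fst b i <= x i <= snd b i.
Definition box_vol (n : nat) (b : box) : R := prodn n (fun i => snd b i - fst b i).
Definition cover_sum (n : nat) (S : pt -> Prop) (s : R) : Prop :=
  exists bs : nat -> box,
    (forall k, box_ok n (bs k)) /\
    (forall x, S x -> exists k, in_box n (bs k) x) /\
    infinite_sum (fun k => box_vol n (bs k)) s.
Definition lebesgue_volume (n : nat) (S : pt -> Prop) (v : R) : Prop :=
  (exists s, cover_sum n S s) /\
  (forall s, cover_sum n S s -> v <= s) /\
  (forall w, (forall s, cover_sum n S s -> w <= s) -> w <= v).

Definition admissible (n : nat) (S : pt -> Prop) : Prop :=
  (exists D, desc_real_alg D /\ forall x, S x <-> desc_set n D x) /\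
  (exists v, lebesgue_volume n S v).

Definition real_period_dim (n : nat) (a : R) : Prop :=
  exists S1 S2 v1 v2, admissible n S1 /\ admissible n S2 /\
    lebesgue_volume n S1 v1 /\ lebesgue_volume n S2 v2 /\ a = v1 - v2.
Definition real_period (a : R) : Prop := exists n, (1 <= n)%nat /\ real_period_dim n a.
Definition period (z : Cpx) : Prop := real_period (fst z) /\ real_period (snd z).

Inductive extnat : Type := Fin (n : nat) | Inf.
Definition emax (d e : extnat) : extnat :=
  match d, e with
  | Fin a, Fin b => Fin (Nat.max a b)
  | _, _ => Inf
  end.

Definition real_deg_is (a : R) (d : extnat) : Prop :=
  (a = 0 /\ d = Fin 0) \/
  (a <> 0 /\
    ((exists n, d = Fin n /\ (1 <= n)%nat /\ real_period_dim n a /\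
        forall m, (1 <= m)%nat -> (m < n)%nat -> ~ real_period_dim m a) \/
     (d = Inf /\ forall n, (1 <= n)%nat -> ~ real_period_dim n a))).

Definition deg_is (p : Cpx) (d : extnat) : Prop :=
  exists da db, real_deg_is (fst p) da /\ real_deg_is (snd p) db /\ d = emax da db.

(* Main.v *)
Require Import Defs.
From Stdlib Require Import Reals List ZArith Lra Lia Classical.
Open Scope R_scope.

Definition sumlen (L : list (R*R)) : R :=
  fold_right (fun p acc => snd p - fst p + acc) 0 L.
Definition okL (L : list (R*R)) : Prop := Forall (fun p => fst p <= snd p) L.
Definition covered (L : list (R*R)) (x : R) : Prop :=
  exists p, In p L /\ fst p <= x <= snd p.

Lemma sumlen_app L1 L2 : sumlen (L1 ++ L2) = sumlen L1 + sumlen L2.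
Proof. induction L1 as [|p L1 IH]; simpl; [lra|rewrite IH; lra]. Qed.

Lemma sumlen_nonneg L : okL L -> 0 <= sumlen L.
Proof. induction 1; simpl; lra. Qed.

Lemma okL_app L1 L2 : okL L1 -> okL L2 -> okL (L1 ++ L2).
Proof. intros; apply Forall_app; auto. Qed.

Lemma FLB1_aux : forall n L, (length L <= n)%nat -> okL L ->
  forall a b, a <= b -> (forall x, a <= x <= b -> covered L x) -> b - a <= sumlen L.
Proof.
  induction n as [|n IH]; intros L HL Hok a b Hab Hc.
  - destruct L; [|simpl in HL; lia].
    destruct (Hc a) as [p [Hp _]]; [lra| destruct Hp].
  - destruct (Hc a) as [[c d] [Hin Hx]]; [lra|]. simpl in Hx.
    destruct (in_split _ _ Hin) as [L1 [L2 ->]].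
    pose proof Hok as Hok0. apply Forall_app in Hok0. destruct Hok0 as [Hok1 Hok2'].
    inversion Hok2' as [|? ? Hcd Hok2]; subst. simpl in Hcd.
    assert (Hs : sumlen (L1 ++ (c, d) :: L2) = (d - c) + sumlen (L1 ++ L2)).
    { rewrite !sumlen_app; simpl; lra. }
    rewrite Hs.
    assert (Hnn : 0 <= sumlen (L1 ++ L2)) by (apply sumlen_nonneg, okL_app; auto).
    destruct (Rle_dec b d) as [Hbd|Hbd]; [lra|].
    assert (Hrest : forall a', d < a' <= b -> b - a' <= sumlen (L1 ++ L2)).
    { intros a' Ha'. apply IH.
      - rewrite length_app in HL |- *; simpl in HL; lia.
      - apply okL_app; auto.
      - lra.
      - intros x Hx'. destruct (Hc x) as [q [Hq Hqx]]; [lra|].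
        apply in_app_or in Hq. destruct Hq as [Hq|[Hq|Hq]].
        + exists q; split; auto; apply in_or_app; auto.
        + subst q; simpl in Hqx; lra.
        + exists q; split; auto; apply in_or_app; auto. }
    assert (b - d <= sumlen (L1 ++ L2)).
    { destruct (Rle_dec (b - d) (sumlen (L1 ++ L2))) as [H|H]; auto.
      exfalso. set (X := sumlen (L1 ++ L2)) in *.
      set (a' := d + Rmin (b - d) ((b - d - X)/2)).
      assert (Hm1 : Rmin (b - d) ((b - d - X)/2) <= (b-d-X)/2) by apply Rmin_r.
      assert (Hm2 : Rmin (b - d) ((b - d - X)/2) <= b - d) by apply Rmin_l.
      assert (Hm3 : 0 < Rmin (b - d) ((b - d - X)/2)) by (apply Rmin_glb_lt; lra).
      specialize (Hrest a'). unfold a' in Hrest. 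
      assert (b - (d + Rmin (b - d) ((b - d - X) / 2)) <= X) by (apply Hrest; lra).
      lra. }
    lra.
Qed.

Lemma FLB1 L a b : okL L -> a <= b -> (forall x, a <= x <= b -> covered L x) ->
  b - a <= sumlen L.
Proof. intros; eapply FLB1_aux; eauto. Qed.

Fixpoint sepS (l : list (R*R)) : Prop :=
  match l with
  | nil => True
  | p :: l' => fst p <= snd p /\ Forall (fun q => snd p < fst q) l' /\ sepS l'
  end.

Definition leftL t (L : list (R*R)) := map (fun p => (Rmin (fst p) t, Rmin (snd p) t)) L.
Definition rightL t (L : list (R*R)) := map (fun p => (Rmax (fst p) t, Rmax (snd p) t)) L.

Lemma min_max_sum x y : Rmin x y + Rmax x y = x + y.
Proof. unfold Rmin, Rmax; destruct (Rle_dec x y); lra. Qed.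

Lemma sumlen_split t L : sumlen L = sumlen (leftL t L) + sumlen (rightL t L).
Proof.
  induction L as [|p L IH]; simpl; [lra|].
  rewrite IH. pose proof (min_max_sum (fst p) t). pose proof (min_max_sum (snd p) t). lra.
Qed.

Lemma okL_left t L : okL L -> okL (leftL t L).
Proof.
  induction 1; constructor; auto; simpl.
  unfold Rmin; destruct (Rle_dec (fst x) t); destruct (Rle_dec (snd x) t); lra.
Qed.
Lemma okL_right t L : okL L -> okL (rightL t L).
Proof.
  induction 1; constructor; auto; simpl.
  unfold Rmax; destruct (Rle_dec (fst x) t); destruct (Rle_dec (snd x) t); lra.
Qed.

Lemma covered_left t L x : x <= t -> covered L x -> covered (leftL t L) x.
Proof.
  intros Hx [p [Hp Hpx]]. exists (Rmin (fst p) t, Rmin (snd p) t); split.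
  - unfold leftL; apply in_map_iff; eauto.
  - simpl; unfold Rmin; destruct (Rle_dec (fst p) t); destruct (Rle_dec (snd p) t); lra.
Qed.
Lemma covered_right t L x : t <= x -> covered L x -> covered (rightL t L) x.
Proof.
  intros Hx [p [Hp Hpx]]. exists (Rmax (fst p) t, Rmax (snd p) t); split.
  - unfold rightL; apply in_map_iff; eauto.
  - simpl; unfold Rmax; destruct (Rle_dec (fst p) t); destruct (Rle_dec (snd p) t); lra.
Qed.

Lemma FLB : forall I L, sepS I -> okL L ->
  (forall p x, In p I -> fst p <= x <= snd p -> covered L x) -> sumlen I <= sumlen L.
Proof.
  induction I as [|[a b] I IH]; intros L Hs Hok Hc.
  - simpl; apply sumlen_nonneg; auto.
  - simpl in Hs |- *. destruct Hs as [Hab [Hf Hs]].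
    rewrite (sumlen_split b L).
    assert (b - a <= sumlen (leftL b L)).
    { apply FLB1; auto. apply okL_left; auto.
      intros x Hx. apply covered_left; [lra|]. apply (Hc (a,b)); simpl; auto. }
    assert (sumlen I <= sumlen (rightL b L)).
    { apply IH; auto. apply okL_right; auto.
      intros p x Hp Hx. apply covered_right.
      - rewrite Forall_forall in Hf. specialize (Hf p Hp). simpl in Hf. lra.
      - apply (Hc p); simpl; auto. }
    lra.
Qed.

Lemma HeineBorel (u w : nat -> R) a b : a <= b ->
  (forall x, a <= x <= b -> exists k, u k < x < w k) ->
  exists N, forall x, a <= x <= b -> exists k, (k <= N)%nat /\ u k < x < w k.
Proof.
  intros Hab Hc.
  set (E := fun x => a <= x <= b /\ exists N, forall y, a <= y <= x ->
                      exists k, (k <= N)%nat /\ u k < y < w k).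
  assert (HE : exists x, E x).
  { exists a. destruct (Hc a) as [k Hk]; [lra|]. split; [lra|].
    exists k; intros y Hy; exists k; split; [lia|]. replace y with a by lra; auto. }
  assert (Hb : bound E) by (exists b; intros x [Hx _]; lra).
  destruct (completeness E Hb HE) as [c [Hub Hlub]].
  assert (Hac : a <= c) by (destruct HE as [x Hx]; pose proof (Hub x Hx); destruct Hx as [Hx _]; lra).
  assert (Hcb : c <= b) by (apply Hlub; intros x [Hx _]; lra).
  destruct (Hc c) as [k0 Hk0]; [lra|].
  assert (Hx : exists x, E x /\ u k0 < x).
  { apply NNPP; intro Hn.
    assert (c <= u k0); [|lra].
    apply Hlub. intros x Hxe. destruct (Rle_dec x (u k0)) as [|Hnl]; auto.
    exfalso; apply Hn; exists x; split; auto; lra. }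
  destruct Hx as [x [[Hxab [N HN]] Hux]].
  set (y := Rmin b ((c + w k0)/2)).
  assert (Hy1 : y <= b) by apply Rmin_l.
  assert (Hy2 : y <= (c + w k0)/2) by apply Rmin_r.
  assert (Hy3 : c <= y) by (apply Rmin_glb; lra).
  assert (Hxc : x <= c) by (apply Hub; split; auto; exists N; auto).
  assert (HyE : forall z, a <= z <= y -> exists k, (k <= Nat.max N k0)%nat /\ u k < z < w k).
  { intros z Hz. destruct (Rle_dec z x).
    - destruct (HN z) as [k [Hk1 Hk2]]; [lra|]. exists k; split; auto; lia.
    - exists k0; split; [lia|]. lra. }
  assert (y <= c) by (apply Hub; split; [lra|]; exists (Nat.max N k0); auto).
  assert (Hyb : y = b).
  { unfold y in *. unfold Rmin in *. destruct (Rle_dec b ((c + w k0) / 2)); lra. }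
  exists (Nat.max N k0). intros z Hz. apply HyE. lra.
Qed.

Fixpoint upto (f : nat -> R*R) (N : nat) : list (R*R) :=
  match N with O => f O :: nil | S n => f (S n) :: upto f n end.

Lemma upto_in f N k : (k <= N)%nat -> In (f k) (upto f N).
Proof.
  induction N; intros Hk; simpl.
  - left; f_equal; lia.
  - destruct (Nat.eq_dec k (S N)) as [->|]; [left; auto| right; apply IHN; lia].
Qed.

Lemma upto_sum f N : sumlen (upto f N) = sum_f_R0 (fun k => snd (f k) - fst (f k)) N.
Proof. induction N; simpl; [lra| rewrite IHN; lra]. Qed.

Lemma upto_ok f N : (forall k, fst (f k) <= snd (f k)) -> okL (upto f N).
Proof. intros H; induction N; simpl; constructor; auto. Qed.

Lemma geom_sum e N : sum_f_R0 (fun k => e * (/2)^(S k)) N = e * (1 - (/2)^(S N)).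
Proof. induction N; simpl in *; [field| rewrite IHN; field]. Qed.

Lemma partial_le (f : nat -> R) s : (forall k, 0 <= f k) -> infinite_sum f s ->
  forall N, sum_f_R0 f N <= s.
Proof.
  intros Hf Hs N. apply growing_ineq.
  - intro n; simpl; specialize (Hf (S n)); lra.
  - exact Hs.
Qed.

Lemma le_eps a b : (forall e, 0 < e -> a <= b + e) -> a <= b.
Proof.
  intros H. destruct (Rle_dec a b); auto.
  specialize (H ((a - b)/2)). lra.
Qed.

Lemma LB (c d : nat -> R) s I : (forall k, c k <= d k) ->
  infinite_sum (fun k => d k - c k) s -> sepS I ->
  (forall p x, In p I -> fst p <= x <= snd p -> exists k, c k <= x <= d k) ->
  sumlen I <= s.
Proof.
  intros Hcd Hs HI Hcov.
  apply le_eps. intros e He.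
  set (g := fun k => (e/2) * (/2)^(S k)).
  assert (Hg : forall k, 0 < g k).
  { intro k; unfold g; apply Rmult_lt_0_compat; [lra|]; apply pow_lt; lra. }
  set (u := fun k => c k - g k). set (w := fun k => d k + g k).
  assert (HN : exists N, forall p x, In p I -> fst p <= x <= snd p ->
             exists k, (k <= N)%nat /\ u k < x < w k).
  { clear HI. induction I as [|p I IH].
    - exists O; intros p x [].
    - destruct IH as [N1 HN1].
      { intros q x Hq Hx; apply (Hcov q); simpl; auto. }
      destruct (Rle_dec (fst p) (snd p)) as [Hp|Hp].
      + destruct (HeineBorel u w (fst p) (snd p) Hp) as [N2 HN2].
        { intros x Hx. destruct (Hcov p x) as [k Hk]; simpl; auto.
          exists k; unfold u, w; specialize (Hg k); lra. }
        exists (Nat.max N1 N2). intros q x [<-|Hq] Hx.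
        * destruct (HN2 x Hx) as [k [Hk1 Hk2]]; exists k; split; auto; lia.
        * destruct (HN1 q x Hq Hx) as [k [Hk1 Hk2]]; exists k; split; auto; lia.
      + exists N1. intros q x [<-|Hq] Hx; [lra|]. apply (HN1 q x Hq Hx). }
  destruct HN as [N HN].
  set (f := fun k => (u k, w k)).
  assert (H1 : sumlen I <= sumlen (upto f N)).
  { apply FLB; auto.
    - apply upto_ok. intro k; unfold f, u, w; simpl; specialize (Hcd k); specialize (Hg k); lra.
    - intros p x Hp Hx. destruct (HN p x Hp Hx) as [k [Hk1 Hk2]].
      exists (f k); split; [apply upto_in; auto| unfold f; simpl; lra]. }
  rewrite upto_sum in H1.
  assert (H2 : sum_f_R0 (fun k => snd (f k) - fst (f k)) N =
               sum_f_R0 (fun k => d k - c k) N + 2 * sum_f_R0 g N).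
  { unfold f, u, w; simpl. clear.
    induction N; simpl; [lra| rewrite IHN; lra]. }
  assert (H3 : sum_f_R0 g N <= e/2).
  { unfold g; rewrite geom_sum. assert (0 < (/2)^(S N)) by (apply pow_lt; lra). nra. }
  assert (H4 : sum_f_R0 (fun k => d k - c k) N <= s).
  { apply partial_le; auto. intro k; specialize (Hcd k); lra. }
  lra.
Qed.

Lemma box_vol1 b : box_vol 1 b = snd b 0%nat - fst b 0%nat.
Proof. unfold box_vol; simpl; ring. Qed.

Lemma in_box1 b x : in_box 1 b x <-> fst b 0%nat <= x 0%nat <= snd b 0%nat.
Proof.
  unfold in_box; split; intros H.
  - apply H; lia.
  - intros i Hi; replace i with 0%nat by lia; auto.
Qed.

Lemma box_ok1 b : box_ok 1 b <-> fst b 0%nat <= snd b 0%nat.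
Proof.
  unfold box_ok; split; intros H.
  - apply H; lia.
  - intros i Hi; replace i with 0%nat by lia; auto.
Qed.

Lemma infinite_sum_ext f g s : (forall k, f k = g k) -> infinite_sum f s -> infinite_sum g s.
Proof.
  intros Hfg H eps He. destruct (H eps He) as [N HN]. exists N. intros n Hn.
  rewrite <- (sum_eq f g n) by auto. auto.
Qed.

Fixpoint sepW (l : list (R*R)) : Prop :=
  match l with
  | nil => True
  | p :: l' => fst p < snd p /\ Forall (fun q => snd p <= fst q) l' /\ sepW l'
  end.

Definition nthlen (L : list (R*R)) k := snd (nth k L (0,0)) - fst (nth k L (0,0)).

Lemma sum_nth : forall L n, (length L <= S n)%nat -> sum_f_R0 (nthlen L) n = sumlen L.
Proof.
  induction L as [|p L IH]; intros n Hn.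
  - unfold nthlen. simpl. clear Hn. induction n; simpl; [lra| rewrite IHn; lra].
  - destruct n.
    + destruct L; [|simpl in Hn; lia]. unfold nthlen; simpl; lra.
    + rewrite decomp_sum by lia. simpl pred.
      assert (E : sum_f_R0 (fun i => nthlen (p :: L) (S i)) n = sum_f_R0 (nthlen L) n)
        by (apply sum_eq; intros; reflexivity).
      rewrite E, (IH n) by (simpl in Hn; lia).
      unfold nthlen; simpl; lra.
Qed.

Definition cover_of (L : list (R*R)) : nat -> box :=
  fun k => ((fun _ => fst (nth k L (0,0))), (fun _ => snd (nth k L (0,0)))).

Lemma cover_of_sum L : infinite_sum (fun k => box_vol 1 (cover_of L k)) (sumlen L).
Proof.
  intros eps He. exists (length L). intros n Hn.
  assert (sum_f_R0 (fun k => box_vol 1 (cover_of L k)) n = sumlen L).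
  { rewrite <- (sum_nth L n) by lia. apply sum_eq. intros i _.
    rewrite box_vol1; unfold cover_of, nthlen; simpl; auto. }
  rewrite H. unfold Rdist. rewrite Rminus_diag, Rabs_R0. lra.
Qed.

Lemma cover_of_ok L : okL L -> forall k, box_ok 1 (cover_of L k).
Proof.
  intros HL k. apply box_ok1. unfold cover_of; simpl.
  destruct (Nat.lt_ge_cases k (length L)) as [Hk|Hk].
  - unfold okL in HL; rewrite Forall_forall in HL. apply HL, nth_In; auto.
  - rewrite nth_overflow by auto; simpl; lra.
Qed.

Lemma cover_of_in L x p : In p L -> fst p <= x 0%nat <= snd p ->
  exists k, in_box 1 (cover_of L k) x.
Proof.
  intros Hp Hx. destruct (In_nth L p (0,0) Hp) as [k [Hk Hnth]].
  exists k. apply in_box1; unfold cover_of; simpl. rewrite Hnth; auto.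
Qed.

Definition degen (F : list R) := map (fun z => (z,z)) F.

Lemma sumlen_degen F : sumlen (degen F) = 0.
Proof. induction F; simpl; [lra| rewrite IHF; lra]. Qed.

Lemma okL_degen F : okL (degen F).
Proof. induction F; constructor; simpl; auto; lra. Qed.

Lemma sepW_ok I : sepW I -> okL I.
Proof. induction I as [|p I IH]; simpl; intros; constructor; try lra; tauto. Qed.

Lemma sepW_lt I p : sepW I -> In p I -> fst p < snd p.
Proof. induction I as [|q I IH]; simpl; [tauto|]. intros [H1 [_ H2]] [->|H]; auto. Qed.

Definition shrink d (I : list (R*R)) :=
  map (fun p => (fst p + Rmin d ((snd p - fst p)/3), snd p - Rmin d ((snd p - fst p)/3))) I.

Lemma shrink_sep d I : 0 < d -> sepW I -> sepS (shrink d I).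
Proof.
  intros Hd. induction I as [|p I IH]; simpl; auto.
  intros [Hp [Hf Hs]]. 
  assert (Hm1 : Rmin d ((snd p - fst p)/3) <= (snd p - fst p)/3) by apply Rmin_r.
  assert (Hm2 : 0 < Rmin d ((snd p - fst p)/3)) by (apply Rmin_glb_lt; lra).
  split; [lra|]. split; [|auto].
  rewrite Forall_forall in *. intros q Hq. unfold shrink in Hq.
  apply in_map_iff in Hq. destruct Hq as [q' [<- Hq']]. simpl.
  specialize (Hf q' Hq').
  assert (0 <= Rmin d ((snd q' - fst q')/3)).
  { unfold Rmin; destruct (Rle_dec d ((snd q' - fst q') / 3)); try lra.
    destruct (Rle_dec (fst q') (snd q')) as [H|H]; [lra|].
    exfalso. apply H. left. apply (sepW_lt I); auto. }
  lra.
Qed.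

Lemma shrink_len d I : 0 < d -> sepW I ->
  sumlen I - 2 * d * INR (length I) <= sumlen (shrink d I).
Proof.
  intros Hd. induction I as [|p I IH]; [simpl; lra|].
  intros [Hp [_ Hs]]. specialize (IH Hs).
  assert (Hm : Rmin d ((snd p - fst p)/3) <= d) by apply Rmin_l.
  replace (INR (length (p::I))) with (INR (length I) + 1) by (cbn [length]; rewrite S_INR; ring).
  unfold shrink in *; simpl map; unfold sumlen in *; simpl fold_right. lra.
Qed.

Lemma shrink_in d I q x : 0 < d -> sepW I -> In q (shrink d I) -> fst q <= x <= snd q ->
  exists p, In p I /\ fst p < x < snd p.
Proof.
  intros Hd HI Hq Hx. unfold shrink in Hq. apply in_map_iff in Hq.
  destruct Hq as [p [<- Hp]]. exists p; split; auto. simpl in Hx.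
  assert (fst p < snd p).
  { apply (sepW_lt I); auto. }
  assert (0 < Rmin d ((snd p - fst p)/3)) by (apply Rmin_glb_lt; lra).
  lra.
Qed.

Lemma cover_LB (S : pt -> Prop) s I : cover_sum 1 S s -> sepS I ->
  (forall p x, In p I -> fst p <= x <= snd p -> S (fun _ => x)) -> sumlen I <= s.
Proof.
  intros [bs [Hok [Hcov Hsum]]] HI HS.
  apply (LB (fun k => fst (bs k) 0%nat) (fun k => snd (bs k) 0%nat) s I).
  - intro k; exact (proj1 (box_ok1 (bs k)) (Hok k)).
  - eapply infinite_sum_ext; [|exact Hsum]. intro k; apply box_vol1.
  - auto.
  - intros p x Hp Hx. destruct (Hcov _ (HS p x Hp Hx)) as [k Hk].
    exists k. apply in_box1 in Hk. auto.
Qed.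

Lemma Main1D (S : pt -> Prop) I F : sepW I ->
  (forall p x, In p I -> fst p < x 0%nat < snd p -> S x) ->
  (forall x, S x -> In (x 0%nat) F \/ exists p, In p I /\ fst p <= x 0%nat <= snd p) ->
  lebesgue_volume 1 S (sumlen I).
Proof.
  intros HI Hin Hout.
  set (L := I ++ degen F).
  assert (HL : sumlen L = sumlen I) by (unfold L; rewrite sumlen_app, sumlen_degen; lra).
  assert (Hc : cover_sum 1 S (sumlen I)).
  { exists (cover_of L). split; [apply cover_of_ok, okL_app; [apply sepW_ok; auto| apply okL_degen]|].
    split; [|rewrite <- HL; apply cover_of_sum].
    intros x Hx. destruct (Hout x Hx) as [HF|[p [Hp Hpx]]].
    - apply (cover_of_in L x (x 0%nat, x 0%nat)); [|simpl; lra].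
      unfold L; apply in_or_app; right; unfold degen; apply in_map_iff; eauto.
    - apply (cover_of_in L x p); auto. unfold L; apply in_or_app; auto. }
  split; [eauto|split].
  - intros s Hs. apply le_eps. intros e He.
    set (d := e / (2 * INR (length I) + 1)).
    assert (Hpos : 0 <= INR (length I)) by apply pos_INR.
    assert (Hd : 0 < d) by (unfold d; apply Rdiv_lt_0_compat; lra).
    assert (Hde : 2 * d * INR (length I) <= e).
    { unfold d. apply (Rmult_le_reg_r (2 * INR (length I) + 1)); [lra|].
      field_simplify; [|lra]. nra. }
    pose proof (shrink_len d I Hd HI).
    assert (sumlen (shrink d I) <= s).
    { apply (cover_LB S); auto. apply shrink_sep; auto.
      intros q x Hq Hx. destruct (shrink_in d I q x Hd HI Hq Hx) as [p [Hp Hpx]].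
      apply (Hin p); auto. }
    lra.
  - intros w Hw. apply Hw; auto.
Qed.

Lemma NoRayR (S : pt -> Prop) s z : cover_sum 1 S s -> (forall x : pt, z <= x 0%nat -> S x) -> False.
Proof.
  intros Hc Hr.
  assert (H : sumlen ((z, z + Rabs s + 1) :: nil) <= s).
  { apply (cover_LB S); auto.
    - simpl. pose proof (Rabs_pos s). repeat split; auto; lra.
    - intros p x [<-|[]] Hx. apply Hr. simpl in Hx; lra. }
  simpl in H. pose proof (Rle_abs s). lra.
Qed.

Lemma NoRayL (S : pt -> Prop) s z : cover_sum 1 S s -> (forall x : pt, x 0%nat <= z -> S x) -> False.
Proof.
  intros Hc Hr.
  assert (H : sumlen ((z - Rabs s - 1, z) :: nil) <= s).
  { apply (cover_LB S); auto.
    - simpl. pose proof (Rabs_pos s). repeat split; auto; lra.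
    - intros p x [<-|[]] Hx. apply Hr. simpl in Hx; lra. }
  simpl in H. pose proof (Rle_abs s). lra.
Qed.

Fixpoint ssorted (l : list R) : Prop :=
  match l with nil => True | x :: t => Forall (fun y => x < y) t /\ ssorted t end.

Lemma insert_ex : forall zs, ssorted zs -> forall a, exists zs', ssorted zs' /\
  forall w, In w zs' <-> (a = w \/ In w zs).
Proof.
  induction zs as [|z t IH]; intros Hs a.
  - exists (a :: nil); simpl; split; [split; auto|]. intros w; split; intros [H|H]; auto; try tauto.
  - destruct Hs as [Hf Hs]. destruct (Rtotal_order a z) as [Hl|[He|Hg]].
    + exists (a :: z :: t). split.
      * simpl. split; [|split; auto]. constructor; auto.
        rewrite Forall_forall in *. intros y Hy. specialize (Hf y Hy). lra.
      * intros w; simpl; split; intros H; tauto.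
    + subst. exists (z :: t); split; [simpl; auto|]. intros w; simpl; split; intros H; tauto.
    + destruct (IH Hs a) as [t' [Ht' Hin]]. exists (z :: t'). split.
      * simpl; split; auto. rewrite Forall_forall in *. intros y Hy.
        apply Hin in Hy. destruct Hy as [<-|Hy]; auto.
      * intros w; simpl; rewrite Hin; tauto.
Qed.

Lemma sort_ex : forall Z, exists zs, ssorted zs /\ forall w, In w zs <-> In w Z.
Proof.
  induction Z as [|a Z IH].
  - exists nil; simpl; tauto.
  - destruct IH as [zs [Hs Hin]]. destruct (insert_ex zs Hs a) as [zs' [Hs' Hin']].
    exists zs'; split; auto. intros w; rewrite Hin', Hin; simpl; tauto.
Qed.

Lemma vol_unique n S v1 v2 : lebesgue_volume n S v1 -> lebesgue_volume n S v2 -> v1 = v2.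
Proof.
  intros [_ [H1 H1']] [_ [H2 H2']].
  apply Rle_antisym; [apply H2'; auto| apply H1'; auto].
Qed.

Section Build.
Variable S : pt -> Prop.
Variable Z : list R.
Hypothesis HS : forall x y : pt, x 0%nat < y 0%nat ->
  (forall w, In w Z -> ~ (x 0%nat <= w <= y 0%nat)) -> (S x <-> S y).
Hypothesis Hdep : forall x y : pt, x 0%nat = y 0%nat -> (S x <-> S y).

Lemma build : forall t z, ssorted (z :: t) -> (forall w, In w Z -> In w (z :: t) \/ w < z) ->
  exists I, sepW I /\ Forall (fun p => In (fst p) (z :: t) /\ In (snd p) (z :: t)) I /\
    Forall (fun p => z <= fst p) I /\
    (forall p x, In p I -> fst p < x 0%nat < snd p -> S x) /\
    (forall x, S x -> z <= x 0%nat -> (exists w, In w (z :: t) /\ x 0%nat <= w) ->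
       In (x 0%nat) (z :: t) \/ exists p, In p I /\ fst p <= x 0%nat <= snd p).
Proof.
  induction t as [|z' t IH]; intros z Hs Hinv.
  - exists nil. simpl. repeat split; auto; try tauto.
    intros x _ Hz [w [[<-|[]] Hw]]. left; left; lra.
  - simpl in Hs. destruct Hs as [Hf [Hf' Hs']].
    rewrite Forall_forall in Hf, Hf'.
    assert (Hzz : z < z') by (apply Hf; simpl; auto).
    destruct (IH z') as [I' [HI'1 [HI'2 [HI'3 [HI'4 HI'5]]]]].
    { simpl; split; auto. rewrite Forall_forall; auto. }
    { intros w Hw. destruct (Hinv w Hw) as [[->|H]|H]; auto; right; lra. }
    assert (Gc : forall x y : pt, z < x 0%nat < z' -> z < y 0%nat < z' -> (S x <-> S y)).
    { assert (K : forall x y : pt, z < x 0%nat < z' -> z < y 0%nat < z' -> x 0%nat < y 0%nat -> (S x <-> S y)).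
      { intros x y Hx Hy Hxy. apply HS; auto. intros w Hw Hw'.
        destruct (Hinv w Hw) as [[->|[->|Hw2]]|Hw2]; try lra.
        specialize (Hf' w Hw2); lra. }
      intros x y Hx Hy. destruct (Rtotal_order (x 0%nat) (y 0%nat)) as [H|[H|H]].
      - apply K; auto.
      - apply Hdep; auto.
      - symmetry; apply K; auto. }
    set (mid := fun _ : nat => (z + z')/2).
    assert (Hmid : z < mid 0%nat < z') by (unfold mid; lra).
    assert (Hlift : forall w, In w (z' :: t) -> In w (z :: z' :: t)) by (intros; right; auto).
    destruct (classic (S mid)) as [Hm|Hm].
    + exists ((z, z') :: I'). split; [|split; [|split; [|split]]].
      * simpl. tauto.
      * constructor; [simpl; auto|]. rewrite Forall_forall in *. intros p Hp.
        destruct (HI'2 p Hp); split; auto.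
      * constructor; [simpl; lra|]. rewrite Forall_forall in *. intros p Hp.
        specialize (HI'3 p Hp); lra.
      * intros p x [<-|Hp] Hx; [|eapply HI'4; eauto]. simpl in Hx.
        apply (Gc mid x); auto.
      * intros x Hx Hz [w [Hw Hxw]].
        destruct (Rle_dec (x 0%nat) z') as [Hle|Hgt].
        -- destruct (Req_dec (x 0%nat) z) as [He|Hne]; [left; left; auto|].
           destruct (Req_dec (x 0%nat) z') as [He'|Hne']; [left; right; left; auto|].
           right. exists (z, z'); split; [left; auto|simpl; lra].
        -- destruct (HI'5 x Hx) as [H|[p [Hp Hpx]]]; [lra| |left; right; auto|right; exists p; split; [right|]; auto].
           exists w; split; auto. destruct Hw as [<-|Hw]; auto; lra.
    + exists I'. split; [auto|split; [|split; [|split]]].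
      * rewrite Forall_forall in *. intros p Hp. destruct (HI'2 p Hp); split; auto.
      * rewrite Forall_forall in *. intros p Hp. specialize (HI'3 p Hp); lra.
      * auto.
      * intros x Hx Hz [w [Hw Hxw]].
        destruct (Rle_dec (x 0%nat) z') as [Hle|Hgt].
        -- destruct (Req_dec (x 0%nat) z) as [He|Hne]; [left; left; auto|].
           destruct (Req_dec (x 0%nat) z') as [He'|Hne']; [left; right; left; auto|].
           exfalso. apply Hm. apply (Gc x mid); auto. lra.
        -- destruct (HI'5 x Hx) as [H|[p [Hp Hpx]]]; [lra| |left; right; auto|right; exists p; split; auto].
           exists w; split; auto. destruct Hw as [<-|Hw]; auto; lra.
Qed.
End Build.

Lemma vol1 (S : pt -> Prop) v Z : lebesgue_volume 1 S v ->
  (forall x y : pt, x 0%nat = y 0%nat -> (S x <-> S y)) ->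
  (forall x y : pt, x 0%nat < y 0%nat ->
     (forall w, In w Z -> ~ (x 0%nat <= w <= y 0%nat)) -> (S x <-> S y)) ->
  Z <> nil ->
  exists I, v = sumlen I /\ Forall (fun p => In (fst p) Z /\ In (snd p) Z) I.
Proof.
  intros Hv Hdep HS HZ.
  destruct (sort_ex Z) as [zs [Hs Hin]].
  destruct zs as [|z t].
  { destruct Z as [|a Z]; [congruence|]. exfalso. apply (proj2 (Hin a)); simpl; auto. }
  destruct (build S Z HS Hdep t z Hs) as [I [H1 [H2 [H3 [H4 H5]]]]].
  { intros w Hw; left; apply Hin; auto. }
  assert (Hmin : forall w, In w (z :: t) -> z <= w).
  { intros w [<-|Hw]; [lra|]. destruct Hs as [Hf _]. rewrite Forall_forall in Hf.
    specialize (Hf w Hw); lra. }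
  destruct Hv as [[s Hcs] Hv'].
  assert (Hvol : lebesgue_volume 1 S (sumlen I)).
  { apply (Main1D S I (z :: t)); auto.
    intros x Hx. apply H5; auto.
    - destruct (Rle_dec z (x 0%nat)) as [|Hlt]; auto. exfalso.
      apply (NoRayL S s (x 0%nat)); auto. intros y Hy.
      destruct (Req_dec (y 0%nat) (x 0%nat)) as [He|Hne].
      + apply (Hdep x y); auto.
      + apply (HS y x); [lra| |auto]. intros w Hw Hw'.
        assert (In w (z :: t)) by (apply Hin; auto). specialize (Hmin w H). lra.
    - apply NNPP. intro Hn. apply (NoRayR S s (x 0%nat)); auto. intros y Hy.
      destruct (Req_dec (y 0%nat) (x 0%nat)) as [He|Hne].
      + apply (Hdep x y); auto.
      + apply (HS x y); [lra| |auto]. intros w Hw Hw'. apply Hn. exists w; split; [apply Hin; auto|lra]. }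
  exists I. split.
  - apply (vol_unique 1 S); auto. split; auto. exists s; auto.
  - rewrite Forall_forall in *. intros p Hp. destruct (H2 p Hp). split; apply Hin; auto.
Qed.

Definition fP (P : mpoly) (t : R) : R := mpoly_eval 1 P (fun _ => t).

Lemma mpoly_eval1 P x : mpoly_eval 1 P x = fP P (x 0%nat).
Proof. unfold fP; induction P as [|m P IH]; simpl; [auto|]. rewrite IH. reflexivity. Qed.

Lemma fP_cons m P t : fP (m :: P) t = fst m * (1 * t ^ nth 0 (snd m) 0%nat) + fP P t.
Proof. reflexivity. Qed.

Lemma fP_cont P : continuity (fP P).
Proof.
  induction P as [|m P IH].
  - intro x. unfold fP; simpl. apply continuity_const. intros a b; reflexivity.
  - assert (H1 : continuity (fun t => fst m * (1 * t ^ nth 0 (snd m) 0%nat))).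
    { apply (continuity_scal (fun t => 1 * t ^ nth 0 (snd m) 0%nat) (fst m)).
      apply (continuity_scal (fun t => t ^ nth 0 (snd m) 0%nat) 1).
      apply derivable_continuous, derivable_pow. }
    exact (continuity_plus _ _ H1 IH).
Qed.

Lemma samesign f x y : continuity f -> x < y -> (forall t, x <= t <= y -> f t <> 0) ->
  (0 < f x <-> 0 < f y) /\ (0 <= f x <-> 0 <= f y).
Proof.
  intros Hc Hxy Hnz.
  assert (Hp : 0 < f x * f y).
  { destruct (Rlt_dec 0 (f x * f y)) as [|Hn]; auto. exfalso.
    destruct (IVT_cor f x y Hc) as [z [Hz Hfz]]; [lra|lra|]. apply (Hnz z); auto. }
  assert (f x <> 0) by (apply Hnz; lra). assert (f y <> 0) by (apply Hnz; lra).
  destruct (Rtotal_order (f x) 0) as [Hx|[Hx|Hx]]; destruct (Rtotal_order (f y) 0) as [Hy|[Hy|Hy]];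
    try lra; try nra.
Qed.

Section Adm.
Hypothesis RootsH : forall P, mpoly_real_alg P ->
  (forall t, fP P t = 0) \/ exists Z, Forall real_algebraic Z /\ forall t, fP P t = 0 -> In t Z.
Hypothesis Alg0 : real_algebraic 0.

Lemma desc_roots : forall D, desc_real_alg D -> exists Z, Forall real_algebraic Z /\
  forall B c, In B D -> In c B -> (forall t, fP (fst c) t = 0) \/ (forall t, fP (fst c) t = 0 -> In t Z).
Proof.
  induction D as [|B D IH]; intros HD.
  - exists nil; split; [auto|]. intros B c [].
  - unfold desc_real_alg in HD. inversion HD as [|? ? HB HD']; subst.
    destruct (IH HD') as [Z1 [HZ1 H1]].
    assert (HB' : exists Z, Forall real_algebraic Z /\ forall c, In c B ->
              (forall t, fP (fst c) t = 0) \/ (forall t, fP (fst c) t = 0 -> In t Z)).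
    { clear -HB RootsH. induction B as [|c B IHB].
      - exists nil; split; [auto|]. intros c [].
      - inversion HB as [|? ? Hc HB2]; subst. destruct (IHB HB2) as [Z2 [HZ2 H2]].
        destruct (RootsH (fst c) Hc) as [H0|[Z3 [HZ3 H3]]].
        + exists Z2; split; auto. intros c' [<-|Hc']; auto.
        + exists (Z3 ++ Z2); split; [apply Forall_app; auto|].
          intros c' [<-|Hc'].
          * right; intros t Ht; apply in_or_app; left; auto.
          * destruct (H2 c' Hc') as [H|H]; auto. right; intros t Ht; apply in_or_app; right; auto. }
    destruct HB' as [Z2 [HZ2 H2]].
    exists (Z2 ++ Z1); split; [apply Forall_app; auto|].
    intros B' c [<-|HB''] Hc.
    + destruct (H2 c Hc) as [H|H]; auto. right; intros t Ht; apply in_or_app; left; auto.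
    + destruct (H1 B' c HB'' Hc) as [H|H]; auto. right; intros t Ht; apply in_or_app; right; auto.
Qed.

Lemma adm1_alg S v : admissible 1 S -> lebesgue_volume 1 S v ->
  exists I, v = sumlen I /\ Forall (fun p => real_algebraic (fst p) /\ real_algebraic (snd p)) I.
Proof.
  intros [[D [HD HSD]] _] Hv.
  destruct (desc_roots D HD) as [Z [HZ HZr]].
  assert (Hcond : forall c x, cond_holds 1 c x <-> cond_holds 1 c (fun _ => x 0%nat)).
  { intros c x; unfold cond_holds; rewrite !mpoly_eval1; tauto. }
  assert (Hdep : forall x y : pt, x 0%nat = y 0%nat -> (S x <-> S y)).
  { intros x y Hxy. rewrite !HSD. unfold desc_set.
    split; intros [B [HB HF]]; exists B; split; auto; rewrite Forall_forall in *;
      intros c Hc; specialize (HF c Hc); rewrite Hcond in *; rewrite Hxy in *; auto. }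
  destruct (vol1 S v (0 :: Z)) as [I [HvI HI]]; auto.
  - intros x y Hxy Hw. rewrite !HSD. unfold desc_set.
    assert (Hc : forall B c, In B D -> In c B -> (cond_holds 1 c x <-> cond_holds 1 c y)).
    { intros B c HB Hc. unfold cond_holds. rewrite !mpoly_eval1.
      destruct (HZr B c HB Hc) as [H0|Hr].
      - rewrite !H0; tauto.
      - destruct (samesign (fP (fst c)) (x 0%nat) (y 0%nat) (fP_cont _) Hxy) as [E1 E2].
        + intros t Ht H0. apply (Hw t); [right; apply Hr; auto|auto].
        + destruct (snd c); auto. }
    split; intros [B [HB HF]]; exists B; split; auto; rewrite Forall_forall in *;
      intros c Hcc; specialize (HF c Hcc); specialize (Hc B c HB Hcc); tauto.
  - congruence.
  - exists I; split; auto. rewrite Forall_forall in *. intros p Hp.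
    destruct (HI p Hp) as [H1 H2].
    assert (forall w, In w (0 :: Z) -> real_algebraic w).
    { intros w [<-|Hw]; auto. }
    split; auto.
Qed.
End Adm.

Lemma ralg0 : real_algebraic 0.
Proof. exists (0%Z :: 1%Z :: nil). split; [exists 1%Z; simpl; split; auto; discriminate|]. simpl; ring. Qed.
Lemma ralg1 : real_algebraic 1.
Proof. exists ((-1)%Z :: 1%Z :: nil). split; [exists 1%Z; simpl; split; auto; discriminate|]. simpl; ring. Qed.
Lemma ralgm1 : real_algebraic (-1).
Proof. exists (1%Z :: 1%Z :: nil). split; [exists 1%Z; simpl; split; auto; discriminate|]. simpl; ring. Qed.

Definition empty_set : pt -> Prop := fun _ => False.

Lemma empty_vol : lebesgue_volume 1 empty_set 0.
Proof.
  replace 0 with (sumlen nil) by reflexivity.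
  apply (Main1D _ nil nil); simpl; auto.
Qed.

Lemma empty_adm : admissible 1 empty_set.
Proof.
  split; [|exists 0; apply empty_vol].
  exists nil. split; [constructor|]. intros x; unfold empty_set, desc_set; split; [tauto|].
  intros [B [[] _]].
Qed.

Definition seg (a : R) : pt -> Prop := fun x => 0 <= x 0%nat /\ x 0%nat <= a.

Lemma seg_vol a : 0 <= a -> lebesgue_volume 1 (seg a) a.
Proof.
  intros Ha. destruct (Req_dec a 0) as [->|Hne].
  - replace 0 with (sumlen nil) by reflexivity.
    apply (Main1D _ nil (0 :: nil)); simpl; auto. intros p x [].
    intros x [H1 H2]. left; left; lra.
  - replace a with (sumlen ((0, a) :: nil)) at 2 by (simpl; ring).
    apply (Main1D _ _ nil); simpl.
    + repeat split; auto; lra.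
    + intros p x [<-|[]] Hx; simpl in Hx; unfold seg; lra.
    + intros x [H1 H2]. right. exists (0,a); simpl; split; auto.
Qed.

Definition segD (a : R) : description :=
  ((((1, 1%nat :: nil) :: nil), false) :: (((a, nil) :: (-1, 1%nat :: nil) :: nil), false) :: nil) :: nil.

Lemma seg_adm a : 0 <= a -> real_algebraic a -> admissible 1 (seg a).
Proof.
  intros Ha Halg. split; [|exists a; apply seg_vol; auto].
  exists (segD a). split.
  - unfold segD, desc_real_alg, mpoly_real_alg. repeat constructor; simpl; first [apply ralg1 | apply ralgm1 | auto].
  - intros x. unfold seg, desc_set. split.
    + intros [H1 H2]. eexists. split; [left; reflexivity|].
      repeat apply Forall_cons; try apply Forall_nil; unfold cond_holds, mpoly_eval, mono_eval; simpl; lra.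
    + intros [B [[<-|[]] HB]]. inversion HB as [|? ? H1 HB']; subst. inversion HB' as [|? ? H2 _]; subst.
      unfold cond_holds, mpoly_eval, mono_eval in *; simpl in *. lra.
Qed.

Section Per.
Hypothesis Opp : forall a, real_algebraic a -> real_algebraic (- a).
Hypothesis Add : forall a b, real_algebraic a -> real_algebraic b -> real_algebraic (a + b).
Hypothesis RootsH : forall P, mpoly_real_alg P ->
  (forall t, fP P t = 0) \/ exists Z, Forall real_algebraic Z /\ forall t, fP P t = 0 -> In t Z.

Lemma alg_period1 a : real_algebraic a -> real_period_dim 1 a.
Proof.
  intros Ha. destruct (Rle_dec 0 a) as [H|H].
  - exists (seg a), empty_set, a, 0.
    refine (conj _ (conj _ (conj _ (conj _ _)))).
    + apply seg_adm; auto.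
    + apply empty_adm.
    + apply seg_vol; auto.
    + apply empty_vol.
    + ring.
  - exists empty_set, (seg (-a)), 0, (-a).
    refine (conj _ (conj _ (conj _ (conj _ _)))).
    + apply empty_adm.
    + apply seg_adm; auto; lra.
    + apply empty_vol.
    + apply seg_vol; lra.
    + ring.
Qed.

Lemma sumlen_alg I : Forall (fun p => real_algebraic (fst p) /\ real_algebraic (snd p)) I ->
  real_algebraic (sumlen I).
Proof.
  induction 1 as [|p I [H1 H2] _ IH]; simpl; [apply ralg0|].
  apply Add; auto. unfold Rminus; apply Add; auto.
Qed.

Lemma period1_alg a : real_period_dim 1 a -> real_algebraic a.
Proof.
  intros [S1 [S2 [v1 [v2 [HA1 [HA2 [Hv1 [Hv2 ->]]]]]]]].
  destruct (adm1_alg RootsH ralg0 S1 v1 HA1 Hv1) as [I1 [-> H1]].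
  destruct (adm1_alg RootsH ralg0 S2 v2 HA2 Hv2) as [I2 [-> H2]].
  unfold Rminus; apply Add; [|apply Opp]; apply sumlen_alg; auto.
Qed.
End Per.

Definition Czero : Cpx := (0, 0).
Definition Cone : Cpx := (1, 0).
Definition Copp (z : Cpx) : Cpx := (- fst z, - snd z).
Definition Cinv (z : Cpx) : Cpx :=
  (fst z / (fst z * fst z + snd z * snd z), - snd z / (fst z * fst z + snd z * snd z)).
Definition Cconj (z : Cpx) : Cpx := (fst z, - snd z).

Lemma Cpx_eq (z w : Cpx) : fst z = fst w -> snd z = snd w -> z = w.
Proof. destruct z, w; simpl; intros -> ->; auto. Qed.

Ltac cpx := intros; apply Cpx_eq; unfold Cadd, Cmul, Copp, Czero, Cone, Cconj; simpl; ring.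

Lemma CaddA : forall x y z, Cadd x (Cadd y z) = Cadd (Cadd x y) z. Proof. cpx. Qed.
Lemma CaddC : forall x y, Cadd x y = Cadd y x. Proof. cpx. Qed.
Lemma Cadd0 : forall x, Cadd Czero x = x. Proof. cpx. Qed.
Lemma CaddN : forall x, Cadd (Copp x) x = Czero. Proof. cpx. Qed.
Lemma CmulA : forall x y z, Cmul x (Cmul y z) = Cmul (Cmul x y) z. Proof. cpx. Qed.
Lemma CmulC : forall x y, Cmul x y = Cmul y x. Proof. cpx. Qed.
Lemma Cmul1 : forall x, Cmul Cone x = x. Proof. cpx. Qed.
Lemma CmulDl : forall x y z, Cmul (Cadd x y) z = Cadd (Cmul x z) (Cmul y z). Proof. cpx. Qed.
Lemma Cone_neq : Cone <> Czero.
Proof. unfold Cone, Czero; intros H; injection H; lra. Qed.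
Lemma CmulV : forall x, x <> Czero -> Cmul (Cinv x) x = Cone.
Proof.
  intros [a b] H. assert (Hn : a * a + b * b <> 0).
  { intro H0. apply H. unfold Czero. assert (a = 0) by nra. assert (b = 0) by nra. subst; auto. }
  apply Cpx_eq; unfold Cmul, Cinv, Cone; simpl; field; auto.
Qed.
Lemma Cinv0 : Cinv Czero = Czero.
Proof. apply Cpx_eq; unfold Cinv, Czero; simpl; unfold Rdiv; ring. Qed.

Lemma Ceq_dec (z w : Cpx) : {z = w} + {z <> w}.
Proof.
  destruct z as [a b], w as [c d].
  destruct (Req_EM_T a c) as [->|H1]; [|right; intro H; injection H; auto].
  destruct (Req_EM_T b d) as [->|H2]; [left; auto|right; intro H; injection H; auto].
Qed.

Lemma eval_conj p z : Zpoly_evalC p (Cconj z) = Cconj (Zpoly_evalC p z).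
Proof.
  induction p as [|c p IH]; simpl.
  - apply Cpx_eq; unfold Cconj; simpl; ring.
  - rewrite IH. destruct (Zpoly_evalC p z). apply Cpx_eq; unfold Cadd, Cmul, Cconj; simpl; ring.
Qed.

Lemma eval_real p a : Zpoly_evalC p (a, 0) = (Zpoly_evalR p a, 0).
Proof.
  induction p as [|c p IH]; simpl; auto.
  rewrite IH. apply Cpx_eq; unfold Cadd, Cmul; simpl; ring.
Qed.

Lemma alg_real a : algebraic (a, 0) <-> real_algebraic a.
Proof.
  split; intros [p [Hp Hev]]; exists p; split; auto.
  - rewrite eval_real in Hev. injection Hev; auto.
  - rewrite eval_real, Hev; auto.
Qed.

Lemma alg_conj z : algebraic z -> algebraic (Cconj z).
Proof.
  intros [p [Hp Hev]]; exists p; split; auto. rewrite eval_conj, Hev.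
  apply Cpx_eq; unfold Cconj; simpl; ring.
Qed.

Lemma Cnat0 : (INR 0, 0) = Czero. Proof. apply Cpx_eq; simpl; auto. Qed.
Lemma CnatS n : Cadd Cone (INR n, 0) = (INR (S n), 0).
Proof. apply Cpx_eq; unfold Cadd, Cone; cbn [fst snd]. all: try rewrite S_INR; ring. Qed.
Lemma Cnat_nz k : (INR (S k), 0) <> Czero.
Proof. unfold Czero; intro H. assert (H1 : INR (S k) = 0) by exact (f_equal fst H). pose proof (lt_0_INR (S k) (Nat.lt_0_succ k)). lra. Qed.
Lemma Copp_real a : Copp (a, 0) = (-a, 0).
Proof. apply Cpx_eq; unfold Copp; simpl; ring. Qed.
Lemma IZR_nat_C n : (INR n, 0) = (IZR (Z.of_nat n), 0).
Proof. rewrite INR_IZR_INZ; auto. Qed.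
Lemma IZR_opp_C z : (- IZR z, 0) = (IZR (- z), 0).
Proof. rewrite opp_IZR; auto. Qed.
Lemma Creal_mul a b : Cmul (a, 0) (b, 0) = (a * b, 0).
Proof. apply Cpx_eq; unfold Cmul; simpl; ring. Qed.
Lemma Creal_add a b : Cadd (a, 0) (b, 0) = (a + b, 0).
Proof. apply Cpx_eq; unfold Cadd; simpl; ring. Qed.
Lemma Creal_opp a : Copp (a, 0) = (- a, 0).
Proof. apply Cpx_eq; unfold Copp; simpl; ring. Qed.
Lemma Creal_inj (a b : R) : ((a, 0) : Cpx) = (b, 0) -> a = b.
Proof. intro H; injection H; auto. Qed.
Lemma neg_nat_C n : (- INR n, 0) = (IZR (- Z.of_nat n), 0).
Proof. rewrite opp_IZR, <- INR_IZR_INZ; auto. Qed.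
Definition Ci : Cpx := (0, 1).
Lemma alg_i : algebraic Ci.
Proof.
  exists (1%Z :: 0%Z :: 1%Z :: nil). split; [exists 1%Z; simpl; split; auto; discriminate|].
  apply Cpx_eq; unfold Ci, Cadd, Cmul; simpl; ring.
Qed.
Lemma re_formula z : Cmul (Cadd z (Cconj z)) (Cinv (INR 2, 0)) = (fst z, 0).
Proof. apply Cpx_eq; unfold Cmul, Cadd, Cconj, Cinv; simpl; field. Qed.
Lemma im_formula z : Cmul (Cadd z (Copp (Cconj z))) (Cinv (Cmul (INR 2, 0) Ci)) = (snd z, 0).
Proof. apply Cpx_eq; unfold Cmul, Cadd, Copp, Cconj, Cinv, Ci; simpl; field. Qed.
Lemma parts_formula a b : Cadd (a, 0) (Cmul (b, 0) Ci) = (a, b).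
Proof. apply Cpx_eq; unfold Cmul, Cadd, Ci; simpl; ring. Qed.
Lemma mono_formula c x e y : Cadd (Cmul (c, 0) (x ^ e, 0)) (y, 0) = (c * (1 * x ^ e) + y, 0).
Proof. apply Cpx_eq; unfold Cmul, Cadd; simpl; ring. Qed.
Lemma pow_formula x e : Cmul (x, 0) (x ^ e, 0) = (x ^ S e, 0).
Proof. apply Cpx_eq; unfold Cmul; simpl; ring. Qed.

Section Final.
Hypothesis ralg_opp : forall a, real_algebraic a -> real_algebraic (- a).
Hypothesis ralg_add : forall a b, real_algebraic a -> real_algebraic b -> real_algebraic (a + b).
Hypothesis RootsH_proof : forall P, mpoly_real_alg P ->
  (forall t, fP P t = 0) \/ exists Z, Forall real_algebraic Z /\ forall t, fP P t = 0 -> In t Z.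
Hypothesis alg_parts : forall z, algebraic z <-> real_algebraic (fst z) /\ real_algebraic (snd z).

Lemma P1 a : real_period_dim 1 a -> real_algebraic a.
Proof. apply period1_alg; [exact ralg_opp | exact ralg_add | exact RootsH_proof]. Qed.
Lemma P2 a : real_algebraic a -> real_period_dim 1 a.
Proof. apply alg_period1; exact ralg_opp. Qed.

Lemma rdeg_alg a d : real_deg_is a (Fin d) -> (d <= 1)%nat -> real_algebraic a.
Proof.
  intros [[-> _]|[Ha [[n [Hn [H1 [Hp _]]]]|[Hinf _]]]] Hd.
  - apply ralg0.
  - injection Hn as <-. replace d with 1%nat in Hp by lia. apply P1; auto.
  - discriminate.
Qed.

Lemma rdeg_zero d : real_deg_is 0 (Fin d) -> d = 0%nat.
Proof.
  intros [[_ H]|[Ha _]]; [injection H; auto| lra].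
Qed.

Lemma rdeg1 a : a <> 0 -> real_algebraic a -> real_deg_is a (Fin 1).
Proof.
  intros Ha Halg. right. split; auto. left. exists 1%nat.
  split; auto. split; auto. split; [apply P2; auto|]. intros m Hm1 Hm2. lia.
Qed.

Lemma rdeg0 : real_deg_is 0 (Fin 0).
Proof. left; auto. Qed.

Lemma rdeg_01 a : real_algebraic a -> exists k, (k <= 1)%nat /\ real_deg_is a (Fin k) /\ (k = 0%nat <-> a = 0).
Proof.
  intros H. destruct (Req_dec a 0) as [->|Hne].
  - exists 0%nat. split; auto. split; [apply rdeg0|tauto].
  - exists 1%nat. split; auto. split; [apply rdeg1; auto|]. split; intros; [lia|contradiction].
Qed.

Lemma emax_fin da db k : emax da db = Fin k -> exists x y, da = Fin x /\ db = Fin y /\ Nat.max x y = k.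
Proof.
  destruct da, db; simpl; intros H; try discriminate. injection H as <-. eauto.
Qed.

Lemma main_gen :
  (forall p : Cpx, deg_is p (Fin 1) <-> (p <> (0, 0) /\ algebraic p)) /\
  (forall p : Cpx, algebraic p -> period p) /\
  (forall p : Cpx, period p -> (deg_is p (Fin 0) \/ deg_is p (Fin 1)) -> algebraic p).
Proof.
  split; [|split].
  - intros [a b]. split.
    + intros [da [db [Ha [Hb He]]]]. symmetry in He.
      destruct (emax_fin da db 1 He) as [x [y [-> [-> Hxy]]]]. simpl in Ha, Hb.
      split.
      * intros Heq. injection Heq as -> ->.
        apply rdeg_zero in Ha. apply rdeg_zero in Hb. subst. simpl in Hxy. discriminate.
      * apply alg_parts; simpl; split; [apply (rdeg_alg a x)|apply (rdeg_alg b y)]; auto; lia.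
    + intros [Hnz Halg]. apply alg_parts in Halg. simpl in Halg. destruct Halg as [Ha Hb].
      destruct (rdeg_01 a Ha) as [x [Hx [Hdx Hx0]]].
      destruct (rdeg_01 b Hb) as [y [Hy [Hdy Hy0]]].
      exists (Fin x), (Fin y). split; auto. split; auto. simpl. f_equal.
      destruct x as [|[|x]]; destruct y as [|[|y]]; try lia.
      exfalso. apply Hnz. rewrite (proj1 Hx0 eq_refl), (proj1 Hy0 eq_refl). auto.
  - intros [a b] H. apply alg_parts in H. simpl in H. destruct H as [Ha Hb].
    split; simpl; exists 1%nat; split; auto; apply P2; auto.
  - intros [a b] _ Hd. apply alg_parts; simpl.
    destruct Hd as [[da [db [Ha [Hb He]]]]|[da [db [Ha [Hb He]]]]]; symmetry in He;
      simpl in Ha, Hb;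
      [destruct (emax_fin da db 0 He) as [x [y [-> [-> Hxy]]]]
      |destruct (emax_fin da db 1 He) as [x [y [-> [-> Hxy]]]]];
      split; [apply (rdeg_alg a x)|apply (rdeg_alg b y)| apply (rdeg_alg a x)|apply (rdeg_alg b y)]; auto; lia.
Qed.

End Final.

From Stdlib Require Import Reals List ZArith Classical ClassicalEpsilon FunctionalExtensionality.
Set Warnings "-notation-overridden -ambiguous-paths -deprecated-since-mathcomp-2.4.0".

From HB Require Import structures.
From mathcomp Require Import all_boot all_order all_algebra.
Set Implicit Arguments. Unset Strict Implicit. Unset Printing Implicit Defensive.
Import Order.TTheory GRing.Theory Num.Theory.
Local Open Scope ring_scope.

Definition Ceqb (z w : Cpx) : bool := if Ceq_dec z w then true else false.
Lemma Ceqb_axiom : Equality.axiom Ceqb.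
Proof. move=> z w; rewrite /Ceqb; case: (Ceq_dec z w) => H; constructor; auto. Qed.
HB.instance Definition _ := hasDecEq.Build Cpx Ceqb_axiom.

Definition Cfind (P : pred Cpx) (n : nat) : option Cpx :=
  match excluded_middle_informative (exists x, P x) with
  | left H => Some (proj1_sig (constructive_indefinite_description _ H))
  | right _ => None
  end.
Lemma Cfind_correct P n x : Cfind P n = Some x -> P x.
Proof.
  rewrite /Cfind; case: excluded_middle_informative => // H [<-].
  exact: (proj2_sig (constructive_indefinite_description _ H)).
Qed.
Lemma Cfind_complete (P : pred Cpx) : (exists x, P x) -> exists n, Cfind P n.
Proof. move=> H; exists 0%N; rewrite /Cfind; case: excluded_middle_informative => //. Qed.
Lemma Cfind_ext (P Q : pred Cpx) : P =1 Q -> Cfind P =1 Cfind Q.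
Proof.
  move=> E n. have EPQ : P = Q by apply: functional_extensionality_dep => x; apply: E.
  by rewrite EPQ.
Qed.
HB.instance Definition _ := hasChoice.Build Cpx Cfind_correct Cfind_complete Cfind_ext.

HB.instance Definition _ := GRing.isZmodule.Build Cpx CaddA CaddC Cadd0 CaddN.

Lemma Cone_neq' : Cone != Czero. Proof. apply/eqP; exact: Cone_neq. Qed.
HB.instance Definition _ := GRing.Zmodule_isComNzRing.Build Cpx CmulA CmulC Cmul1 CmulDl Cone_neq'.

Lemma CmulV' (x : Cpx) : x != 0 -> Cmul (Cinv x) x = 1.
Proof. move/eqP=> H; exact: CmulV. Qed.
HB.instance Definition _ := GRing.ComNzRing_isField.Build Cpx CmulV' Cinv0.



Lemma natrC (n : nat) : (n%:R : Cpx) = (INR n, IZR Z0).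
Proof.
  elim: n => [|n IH]; first by rewrite Cnat0.
  by rewrite mulrS IH; apply: CnatS.
Qed.

Lemma natrC_neq0 (n : nat) : (0 < n)%N -> (n%:R : Cpx) != 0.
Proof. case: n => // k _; rewrite natrC; apply/eqP; exact: Cnat_nz. Qed.

Lemma intrC_neq0 (i : int) : i != 0 -> (i%:~R : Cpx) != 0.
Proof.
  case: i => [n|n] Hn.
  - by apply: natrC_neq0; rewrite lt0n; apply: contraNneq Hn => ->.
  - by rewrite NegzE mulrNz oppr_eq0; apply: natrC_neq0.
Qed.

Definition rC (q : rat) : Cpx := ratr q.

Lemma nz_den (x : rat) : ((denq x)%:~R : Cpx) != 0.
Proof. by apply: intrC_neq0; rewrite denq_eq0. Qed.

Fact rC_is_zmod_morphism : zmod_morphism rC.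
Proof.
have injZtoQ: @injective rat int intr by apply: intr_inj.
move=> x y; rewrite /rC /ratr.
apply: (canLR (mulfK (nz_den _))); apply: (mulIf (nz_den x)).
rewrite mulrAC mulrBl divfK ?nz_den // mulrAC -!rmorphM.
apply: (mulIf (nz_den y)); rewrite mulrAC mulrBl divfK ?nz_den //.
rewrite -!(rmorphM, rmorphB); congr _%:~R; apply: injZtoQ.
rewrite !(rmorphM, rmorphB) /= [_ - _]lock /= -lock !numqE.
by rewrite (mulrAC y) -!mulrBl -mulrA mulrAC !mulrA.
Qed.

Fact rC_is_monoid_morphism : monoid_morphism rC.
Proof.
have injZtoQ: @injective rat int intr by apply: intr_inj.
split=> [|x y]; first by rewrite /rC /ratr divr1.
rewrite /rC /ratr mulrC mulrAC; apply: canLR (mulKf (nz_den _)) _; rewrite !mulrA.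
do 2!apply: canRL (mulfK (nz_den _)) _; rewrite -!rmorphM; congr _%:~R.
apply: injZtoQ; rewrite !rmorphM [x * y]lock /= !numqE -lock.
by rewrite -!mulrA mulrA mulrCA -!mulrA (mulrCA y).
Qed.

HB.instance Definition _ := GRing.isZmodMorphism.Build rat Cpx rC rC_is_zmod_morphism.
HB.instance Definition _ := GRing.isMonoidMorphism.Build rat Cpx rC rC_is_monoid_morphism.

Check (rC : {rmorphism rat -> Cpx}).

Definition int_of_Z (z : Z) : int :=
  match z with Z0 => 0 | Zpos p => Posz (Pos.to_nat p) | Zneg p => - Posz (Pos.to_nat p) end.
Definition Z_of_int (i : int) : Z :=
  match i with Posz n => Z.of_nat n | Negz n => Z.opp (Z.of_nat n.+1) end.

Lemma intZC (z : Z) : ((int_of_Z z)%:~R : Cpx) = (IZR z, IZR Z0).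
Proof.
  case: z => [|p|p].
  - by [].
  - by rewrite -pmulrn natrC IZR_nat_C positive_nat_Z.
  - rewrite mulrNz -pmulrn natrC.
    change (Copp (INR (Pos.to_nat p), IZR Z0) = (IZR (Z.neg p), IZR Z0)).
    by rewrite Copp_real neg_nat_C positive_nat_Z.
Qed.

Lemma ZintC (i : int) : (i%:~R : Cpx) = (IZR (Z_of_int i), IZR Z0).
Proof.
  case: i => [n|n] /=.
  - by rewrite -pmulrn natrC IZR_nat_C.
  - rewrite NegzE mulrNz -pmulrn natrC.
    change (Copp (INR n.+1, IZR Z0) = (IZR (Z.opp (Z.of_nat n.+1)), IZR Z0)).
    by rewrite Copp_real neg_nat_C.
Qed.

Lemma int_of_Z_eq0 z : int_of_Z z = 0 -> z = Z0.
Proof.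
  case: z => [|p|p] //= H.
  - by have := Pos2Nat.is_pos p; move: H => [->] /PeanoNat.Nat.lt_irrefl.
  - move/eqP: H; rewrite oppr_eq0 => /eqP [] H.
    by have := Pos2Nat.is_pos p; rewrite H => /PeanoNat.Nat.lt_irrefl.
Qed.

Lemma Z_of_int_eq0 i : Z_of_int i = Z0 -> i = 0.
Proof.
  case: i => [n|n] /= H.
  - have -> : n = 0%N by lia. by [].
  - exfalso; lia.
Qed.

Lemma hornerZ_eval (p : list Z) (z : Cpx) :
  horner_rec (map (fun c => (int_of_Z c)%:~R : Cpx) p) z = Zpoly_evalC p z.
Proof.
  elim: p => [|c p IH] //=. rewrite IH intZC addrC mulrC. by [].
Qed.

Lemma hornerI_eval (s : seq int) (z : Cpx) :
  horner_rec (map (fun c => c%:~R : Cpx) s) z = Zpoly_evalC (map Z_of_int s) z.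
Proof.
  elim: s => [|c s IH] //=. rewrite IH ZintC addrC mulrC. by [].
Qed.

Lemma In_mem (T : eqType) (x : T) (s : seq T) : x \in s -> In x s.
Proof.
  elim: s => [|y s IH] //; rewrite in_cons => /orP[/eqP ->|H]; [by left|right; exact: IH].
Qed.

Lemma size_lt_length (T : Type) (s : seq T) i : (i < length s)%coq_nat -> (i < size s)%N.
Proof.
  elim: s i => [|a s IH] i /= H; first by exfalso; lia.
  case: i H => [|i] H //. rewrite ltnS; apply: IH; lia.
Qed.

Lemma alg_to (z : Cpx) : algebraic z -> algebraicOver rC z.
Proof.
  move=> [p [[c [Hc Hc0]] Hev]].
  exists (Poly (map (fun c => (int_of_Z c)%:~R : rat) p)).
  - apply/eqP => /polyP H.
    have [i [Hi Hnth]] := In_nth p c Z0 Hc.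
    have := H i; rewrite coef_Poly coef0.
    rewrite (nth_map Z0); last by apply: size_lt_length.
    have -> : nth Z0 p i = List.nth i p Z0.
    { elim: p i {Hc Hi Hnth H Hev} => [|a p IH] [|i] //=. }
    rewrite Hnth => /eqP; rewrite intr_eq0 => /eqP /int_of_Z_eq0. done.
  - rewrite map_Poly -map_comp rootE horner_Poly.
    have -> : map (rC \o (fun c0 : Z => (int_of_Z c0)%:~R)) p = map (fun c => (int_of_Z c)%:~R : Cpx) p.
    { apply: eq_map => c0 /=. by rewrite rmorph_int. }
    by rewrite hornerZ_eval Hev.
Qed.

Lemma alg_from (z : Cpx) : algebraicOver rC z -> algebraic z.
Proof.
  move=> [q nzq rq].
  have [qi [a nza Hq]] := rat_poly_scale q.
  have nzqi : qi != 0.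
  { apply: contra nzq => /eqP Hqi; rewrite Hq Hqi map_poly0 scaler0. by []. }
  have Hr : root (map_poly (fun c => c%:~R : Cpx) qi) z.
  { move: rq; rewrite Hq map_polyZ rootE hornerZ mulf_eq0 => /orP[|].
    - by rewrite fmorph_eq0 invr_eq0 intr_eq0 (negPf nza).
    - rewrite -map_poly_comp rootE.
      have -> : map_poly (rC \o intr) qi = map_poly (fun c => c%:~R : Cpx) qi.
      { apply: eq_map_poly => c0 /=. by rewrite rmorph_int. }
      by []. }
  exists (map Z_of_int qi). split.
  - exists (Z_of_int (lead_coef qi)). split.
    + apply: in_map. apply: In_mem. rewrite lead_coefE. apply: mem_nth.
      by rewrite prednK ?size_poly_gt0.
    + move=> /Z_of_int_eq0 /eqP. by rewrite lead_coef_eq0 (negPf nzqi).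
  - move: Hr; rewrite map_polyE rootE horner_Poly hornerI_eval => /eqP. done.
Qed.

Lemma alg_iff (z : Cpx) : algebraic z <-> algebraicOver rC z.
Proof. split; [exact: alg_to | exact: alg_from]. Qed.

Notation alg := (algebraicOver rC).

Lemma alg_nat n : alg (n%:R : Cpx).
Proof. by rewrite -(rmorph_nat rC); apply: algebraic_id. Qed.

Lemma alg_two_inv : alg (Cinv (INR 2, IZR Z0)).
Proof. rewrite -natrC. exact: (algebraic_inv (alg_nat 2)). Qed.

Lemma alg_parts z : algebraic z <-> real_algebraic (fst z) /\ real_algebraic (snd z).
Proof.
  split.
  - move=> Hz. have Hz' := alg_to Hz. have Hc := alg_to (alg_conj _ Hz).
    split; apply/alg_real/alg_from.
    + rewrite -re_formula. exact: (algebraic_mul (algebraic_add Hz' Hc) alg_two_inv).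
    + rewrite -im_formula. apply: (algebraic_mul (algebraic_add Hz' (algebraic_opp Hc))).
      apply: algebraic_inv. rewrite -natrC. exact: (algebraic_mul (alg_nat 2) (alg_to alg_i)).
  - move=> [/alg_real/alg_to Ha /alg_real/alg_to Hb]. apply: alg_from.
    case: z Ha Hb => a b Ha Hb. rewrite -parts_formula.
    exact: (algebraic_add Ha (algebraic_mul Hb (alg_to alg_i))).
Qed.

Lemma ralg_add a b : real_algebraic a -> real_algebraic b -> real_algebraic (Rplus a b).
Proof.
  move=> /alg_real/alg_to Ha /alg_real/alg_to Hb. apply/alg_real/alg_from.
  rewrite -Creal_add. exact: (algebraic_add Ha Hb).
Qed.

Lemma ralg_opp a : real_algebraic a -> real_algebraic (Ropp a).
Proof.
  move=> /alg_real/alg_to Ha. apply/alg_real/alg_from.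
  rewrite -Creal_opp. exact: (algebraic_opp Ha).
Qed.

Lemma roots_list : forall n (p : {poly Cpx}), (size p <= n)%N -> p != 0 ->
  exists s : seq Cpx, forall x, root p x -> x \in s.
Proof.
  elim=> [|n IH] p Hs Hp.
  - by exfalso; move: Hs; rewrite leqn0 size_poly_eq0 (negPf Hp).
  - case: (classic (exists a, root p a)) => [[a Ha]|Hn]; last first.
      by exists [::] => x Hx; exfalso; apply: Hn; exists x.
    have Hd : ('X - a%:P) %| p by rewrite -root_factor_theorem.
    set q := p %/ ('X - a%:P).
    have Hpq : p = q * ('X - a%:P) by rewrite divpK.
    have Hq : q != 0 by apply: contra Hp => /eqP Hq0; rewrite Hpq Hq0 mul0r.
    have Hsz : (size q <= n)%N.
    { move: Hs; rewrite Hpq size_mul ?polyXsubC_eq0 // size_XsubC addn2 /=. by []. }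
    have [s Hsq] := IH q Hsz Hq.
    exists (a :: s) => x Hx. rewrite in_cons.
    move: Hx; rewrite Hpq rootE hornerM hornerXsubC mulf_eq0 => /orP[Hqx|Hxa].
    + by rewrite (Hsq x Hqx) orbT.
    + by rewrite -subr_eq0 Hxa.
Qed.

Lemma mem_In (T : eqType) (x : T) (s : seq T) : In x s -> x \in s.
Proof. elim: s => [|y s IH] //= [->|H]; rewrite in_cons ?eqxx //; by rewrite IH ?orbT. Qed.

Definition mpolyC (P : mpoly) : {poly Cpx} :=
  foldr (fun m acc => ((fst m, IZR Z0) : Cpx)%:P * 'X^(List.nth 0%N (snd m) 0%N) + acc) 0 P.

Lemma powC (t : R) (e : nat) : ((t, IZR Z0) : Cpx) ^+ e = (pow t e, IZR Z0).
Proof. elim: e => [|e IH]; first by []. by rewrite exprS IH; apply: pow_formula. Qed.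

Lemma mpolyC_horner P t : (mpolyC P).[(t, IZR Z0)] = (fP P t, IZR Z0).
Proof.
  elim: P => [|m P IH]; first by rewrite horner0.
  change (mpolyC (m :: P)) with (((fst m, IZR Z0) : Cpx)%:P * 'X^(List.nth 0%N (snd m) 0%N) + mpolyC P).
  rewrite hornerD hornerCM hornerXn IH powC fP_cons. exact: mono_formula.
Qed.

Lemma mpolyC_coef P : mpoly_real_alg P -> forall i, alg (mpolyC P)`_i.
Proof.
  elim: P => [|m P IH] HP i /=.
  - by rewrite coef0; apply: algebraic0.
  - inversion HP as [|? ? Hm HP']; subst.
    rewrite coefD coefCM coefXn. apply: algebraic_add; last by apply: IH.
    case: (i == _); rewrite ?mulr1 ?mulr0; last by apply: algebraic0.
    by apply/alg_to/alg_real.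
Qed.

Lemma mpolyC_roots P : mpoly_real_alg P -> mpolyC P != 0 ->
  exists Z, Forall real_algebraic Z /\ forall t, fP P t = IZR Z0 -> In t Z.
Proof.
  move=> HP Hnz.
  have [s Hs] := roots_list (leqnn (size (mpolyC P))) Hnz.
  exists (map fst [seq w <- s | root (mpolyC P) w]). split.
  - apply/Forall_forall => a /in_map_iff [w [<- Hw]].
    have : w \in [seq w <- s | root (mpolyC P) w] by apply: mem_In.
    move=> Hw'. have := mem_filter (root (mpolyC P)) w s. rewrite Hw' => /esym /andP[Hr _].
    have Hint : integralOver rC w.
    { apply: (integral_root Hnz Hr) => x /(nthP 0)[i _ <-].
      by apply/integral_algebraic/mpolyC_coef. }
    have /alg_from /alg_parts [] : alg w by apply/integral_algebraic.
    by [].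
  - move=> t Ht. apply/in_map_iff. exists ((t, IZR Z0) : Cpx). split; first by [].
    apply: (@In_mem Cpx). rewrite mem_filter.
    have Hr : root (mpolyC P) (t, IZR Z0) by rewrite rootE mpolyC_horner Ht.
    by rewrite Hr (Hs _ Hr).
Qed.

Lemma RootsH_proof : forall P, mpoly_real_alg P ->
  (forall t, fP P t = IZR Z0) \/ exists Z, Forall real_algebraic Z /\ forall t, fP P t = IZR Z0 -> In t Z.
Proof.
  move=> P HP. case: (eqVneq (mpolyC P) 0) => [H0|Hnz].
  - left => t. apply: Creal_inj. by rewrite -mpolyC_horner H0 horner0.
  - right; exact: mpolyC_roots.
Qed.

Open Scope R_scope.

Theorem mainTheorem3 :
  (forall p : Cpx, deg_is p (Fin 1) <-> (p <> (0, 0) /\ algebraic p)) /\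
  (forall p : Cpx, algebraic p -> period p) /\
  (forall p : Cpx, period p -> (deg_is p (Fin 0) \/ deg_is p (Fin 1)) -> algebraic p).
Proof. exact (main_gen ralg_opp ralg_add RootsH_proof alg_parts). Qed.
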